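(* Let $N\ge2$ and $L=(a_1,\dots,a_N)\in\mathbb{N}_0^N$ with $a_1>0$, and let $H$ be the sequence defined by $H_n=1+\sum_{k=1}^{n-1}a_kH_{n-k}$ for $1\le n\le N+1$ and $H_{n+N}=a_1H_{n+N-1}+\cdots+a_{N-1}H_{n+1}+(1+a_N)H_n$ for all $n\in\mathbb{N}$. Let $\psi$ be the unique positive real zero of $g(x)=x^N-\sum_{k=1}^{N-1}a_kx^{N-k}-(1+a_N)$. Then there are positive real constants $\delta$ and $r$ with $r<1$ such that $H_n=\delta\psi^n+O(\psi^{rn})$ for $n\in\mathbb{N}$.
   Context: $\mathbb{N}_0=\mathbb{N}\cup\{0\}$. (The sequence $H$ is the fundamental sequence of the periodic Zeckendorf collection with principal maximal block $L$; $g$ has exactly one positive real zero, it is simple, and all other complex zeros have modulus less than $\psi$.) *)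

(* Defs.v *)
From Stdlib Require Import Reals Lra Lia.
Open Scope R_scope.

Fixpoint nsum_upto (f : nat -> nat) (n : nat) : nat :=
  match n with
  | O => O
  | S n' => (nsum_upto f n' + f n)%nat
  end.

Fixpoint rsum_upto (f : nat -> R) (n : nat) : R :=
  match n with
  | O => 0
  | S n' => rsum_upto f n' + f n
  end.

Definition gpoly (N : nat) (a : nat -> nat) (x : R) : R :=
  x ^ N - rsum_upto (fun k => INR (a k) * x ^ (N - k)) (N - 1)
  - (1 + INR (a N)).

(* Main.v *)
Require Import Defs.
From Stdlib Require Import Reals Lra Lia.
Open Scope R_scope.

Lemma rsum_le f g n : (forall k, (1<=k<=n)%nat -> f k <= g k) -> rsum_upto f n <= rsum_upto g n.
Proof. induction n; simpl; intros h; [lra|]. apply Rplus_le_compat; [apply IHn; intros; apply h; lia | apply h; lia]. Qed.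
Lemma rsum_scal c f n : rsum_upto (fun k => c * f k) n = c * rsum_upto f n.
Proof. induction n; simpl; [ring|]. rewrite IHn; ring. Qed.
Lemma rsum_ext f g n : (forall k, (1<=k<=n)%nat -> f k = g k) -> rsum_upto f n = rsum_upto g n.
Proof. induction n; simpl; intros h; [lra|]. rewrite IHn, (h (S n)) by (try intros; try apply h; lia). ring. Qed.
Lemma rsum_minus f g n : rsum_upto (fun k => f k - g k) n = rsum_upto f n - rsum_upto g n.
Proof. induction n; simpl; [ring|]. rewrite IHn; ring. Qed.
Lemma rsum_opp f n : rsum_upto (fun k => - f k) n = - rsum_upto f n.
Proof. induction n; simpl; [ring|]. rewrite IHn; ring. Qed.
Lemma rsum_ge1 f n : (1 <= n)%nat -> (forall k, (1<=k<=n)%nat -> 0 <= f k) -> f 1%nat <= rsum_upto f n.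
Proof. induction n; intros h1 h; [lia|]. destruct n; simpl in *.
 - lra.
 - assert (f 1%nat <= rsum_upto f (S n)) by (apply IHn; [lia| intros; apply h; lia]).
   assert (0 <= f (S (S n))) by (apply h; lia). simpl in H. lra. Qed.
Lemma INR_nsum f n : INR (nsum_upto f n) = rsum_upto (fun k => INR (f k)) n.
Proof. induction n; simpl; [reflexivity|]. rewrite plus_INR, IHn. reflexivity. Qed.

Definition isrec (N:nat) (p u : nat -> R) :=
  forall m, (N+1 <= m)%nat -> u m = rsum_upto (fun k => p k * u (m-k)%nat) N.

Lemma isrec_opp N p u : isrec N p u -> isrec N p (fun i => - u i).
Proof. intros h m hm. rewrite (h m hm). rewrite <- rsum_opp. apply rsum_ext. intros; ring. Qed.

Section Avg.
Variables (N : nat) (p : nat -> R).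
Hypothesis hN : (1 <= N)%nat.
Hypothesis Hp : forall k, (1<=k<=N)%nat -> 0 <= p k.
Hypothesis Hs : rsum_upto p N = 1.

Lemma lower_prop u lo n : isrec N p u -> (1 <= n)%nat ->
  (forall i, (n <= i < n+N)%nat -> lo <= u i) -> forall i, (n <= i)%nat -> lo <= u i.
Proof.
  intros hr hn hw.
  assert (forall t i, (n <= i < n+N+t)%nat -> lo <= u i).
  { induction t; intros i hi. apply hw; lia.
    destruct (Nat.lt_ge_cases i (n+N+t)) as [hl|hl]. apply IHt; lia.
    assert (i = n+N+t)%nat by lia. subst i.
    rewrite (hr _) by lia.
    replace lo with (lo * rsum_upto p N) by (rewrite Hs; ring).
    rewrite <- rsum_scal. apply rsum_le. intros k hk.
    assert (lo <= u (n+N+t-k)%nat) by (apply IHt; lia).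
    assert (0 <= p k) by (apply Hp; lia). nra. }
  intros i hi. apply (H (S i)). lia.
Qed.

Lemma upper_prop u hi n : isrec N p u -> (1 <= n)%nat ->
  (forall i, (n <= i < n+N)%nat -> u i <= hi) -> forall i, (n <= i)%nat -> u i <= hi.
Proof.
  intros hr hn hw i hi'.
  assert (- hi <= - u i).
  { apply (lower_prop (fun i => - u i) (-hi) n); auto. apply isrec_opp; auto.
    intros j hj. specialize (hw j hj). lra. }
  lra.
Qed.

Lemma half u lo n d : isrec N p u -> (1 <= n)%nat ->
  (forall i, (n <= i)%nat -> lo <= u i) -> d <= u (n+N-1)%nat - lo ->
  forall t, (t <= N)%nat -> p 1%nat ^ t * d <= u (n+N-1+t)%nat - lo.
Proof.
  intros hr hn hl hd. induction t; intros ht.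
  - rewrite Nat.add_0_r. simpl. lra.
  - replace (n+N-1+S t)%nat with (n+N+t)%nat by lia.
    rewrite (hr _) by lia.
    replace lo with (lo * rsum_upto p N) by (rewrite Hs; ring).
    rewrite <- rsum_scal, <- rsum_minus.
    assert (p 1%nat * (u (n + N + t - 1)%nat - lo) <=
       rsum_upto (fun k => p k * u (n + N + t - k)%nat - lo * p k) N).
    { rewrite (rsum_ext _ (fun k => p k * (u (n + N + t - k)%nat - lo))) by (intros; ring).
      apply (rsum_ge1 (fun k => p k * (u (n + N + t - k)%nat - lo))); auto.
      intros k hk. assert (lo <= u (n+N+t-k)%nat) by (apply hl; lia).
      assert (0 <= p k) by (apply Hp; lia). nra. }
    replace (n+N+t-1)%nat with (n+N-1+t)%nat in H by lia.
    assert (0 <= p 1%nat) by (apply Hp; lia).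
    assert (p 1%nat ^ t * d <= u (n+N-1+t)%nat - lo) by (apply IHt; lia).
    simpl. nra.
Qed.
End Avg.
Lemma pow_le_dec x t n : 0 <= x <= 1 -> (t <= n)%nat -> x ^ n <= x ^ t.
Proof. intros hx ht. replace n with (t + (n-t))%nat by lia. rewrite pow_add.
  assert (x ^ (n-t) <= 1 ^ (n-t)) by (apply pow_incr; lra). rewrite pow1 in H.
  assert (0 <= x ^ t) by (apply pow_le; lra). assert (0 <= x^(n-t)) by (apply pow_le; lra). nra. Qed.

Section Avg2.
Variables (N : nat) (p : nat -> R).
Hypothesis hN : (1 <= N)%nat.
Hypothesis Hp : forall k, (1<=k<=N)%nat -> 0 <= p k.
Hypothesis Hs : rsum_upto p N = 1.
Hypothesis Hp1 : 0 < p 1%nat.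

Lemma p1le1 : p 1%nat <= 1.
Proof. rewrite <- Hs. apply rsum_ge1; auto. Qed.

Definition mu := 1 - p 1%nat ^ N / 2.

Lemma contract u lo hi n : isrec N p u -> (1 <= n)%nat ->
  (forall i, (n <= i < n+N)%nat -> lo <= u i <= hi) ->
  exists lo' hi', (forall i, (n+N <= i < n+N+N)%nat -> lo' <= u i <= hi') /\
    lo <= lo' /\ hi' <= hi /\ hi' - lo' <= mu * (hi - lo).
Proof.
  intros hr hn hw.
  assert (hl : forall i, (n <= i)%nat -> lo <= u i).
  { apply (lower_prop N p hN Hp Hs u lo n hr hn). intros; apply hw; auto. }
  assert (hu : forall i, (n <= i)%nat -> u i <= hi).
  { apply (upper_prop N p hN Hp Hs u hi n hr hn). intros; apply hw; auto. }
  assert (lo <= hi) by (destruct (hw n) as [a b]; lia || lra).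
  pose proof p1le1. unfold mu.
  assert (0 < p 1%nat ^ N) by (apply pow_lt; lra).
  destruct (Rle_lt_dec ((lo+hi)/2) (u (n+N-1)%nat)) as [c|c].
  - exists (lo + p 1%nat ^ N * ((hi-lo)/2)), hi. split; [|split; [|split]]; try nra.
    intros i hi'. split; [|apply hu; lia].
    assert (p 1%nat ^ (i - (n+N-1)) * ((hi-lo)/2) <= u (n+N-1+(i-(n+N-1)))%nat - lo).
    { apply (half N p hN Hp Hs u lo n); auto; try lra; lia. }
    replace (n+N-1+(i-(n+N-1)))%nat with i in H2 by lia.
    assert (p 1%nat ^ N <= p 1%nat ^ (i - (n+N-1))) by (apply pow_le_dec; lra || lia).
    nra.
  - exists lo, (hi - p 1%nat ^ N * ((hi-lo)/2)). split; [|split; [|split]]; try nra.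
    intros i hi'. split; [apply hl; lia|].
    assert (p 1%nat ^ (i - (n+N-1)) * ((hi-lo)/2) <= - u (n+N-1+(i-(n+N-1)))%nat - - hi).
    { apply (half N p hN Hp Hs (fun i => - u i) (-hi) n); auto.
      apply isrec_opp; auto. intros j hj; specialize (hu j hj); lra. lra. lia. }
    replace (n+N-1+(i-(n+N-1)))%nat with i in H2 by lia.
    assert (p 1%nat ^ N <= p 1%nat ^ (i - (n+N-1))) by (apply pow_le_dec; lra || lia).
    nra.
Qed.

Lemma iterate u lo0 hi0 : isrec N p u ->
  (forall i, (1 <= i < 1+N)%nat -> lo0 <= u i <= hi0) ->
  forall j, exists lo hi, lo0 <= lo /\ hi - lo <= mu ^ j * (hi0 - lo0) /\
    forall i, (1 + j*N <= i)%nat -> lo <= u i <= hi.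
Proof.
  intros hr hw.
  assert (forall j, exists lo hi, lo0 <= lo /\ hi - lo <= mu ^ j * (hi0 - lo0) /\
    forall i, (1 + j*N <= i < 1 + j*N + N)%nat -> lo <= u i <= hi).
  { induction j.
    - exists lo0, hi0. simpl. split; [lra|split; [lra|]]. intros; apply hw; lia.
    - destruct IHj as (lo & hi & h1 & h2 & h3).
      destruct (contract u lo hi (1 + j*N) hr ltac:(lia) h3) as (lo' & hi' & g1 & g2 & g3 & g4).
      exists lo', hi'. split; [lra|split].
      + assert (0 <= mu). { unfold mu. pose proof p1le1.
          assert (p 1%nat ^ N <= 1 ^ N) by (apply pow_incr; lra). rewrite pow1 in H0. lra. }
        simpl. nra.
      + intros i hi''. apply g1. simpl. lia. }
  intros j. destruct (H j) as (lo & hi & h1 & h2 & h3). exists lo, hi.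
  split; [auto|split; [auto|]].
  intros i hi'. split.
  - apply (lower_prop N p hN Hp Hs u lo (1 + j*N)); auto; try lia. intros; apply h3; auto.
  - apply (upper_prop N p hN Hp Hs u hi (1 + j*N)); auto; try lia. intros; apply h3; auto.
Qed.
End Avg2.
Lemma conv (u : nat -> R) (N:nat) (mu D lo0 : R) : 0 <= mu < 1 -> 0 <= D ->
  (forall j, exists lo hi, lo0 <= lo /\ hi - lo <= mu^j * D /\
     forall i, (1+j*N <= i)%nat -> lo <= u i <= hi) ->
  exists d, lo0 <= d /\ forall j i, (1+j*N <= i)%nat -> Rabs (u i - d) <= mu^j * D.
Proof.
  intros hmu hD hit.
  assert (hc : Cauchy_crit u).
  { intros eps he.
    assert (Rabs mu < 1) by (rewrite Rabs_right; lra).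
    destruct (pow_lt_1_zero mu H (eps/(D+1))) as [K hK].
    { apply Rdiv_lt_0_compat; lra. }
    exists (1 + K*N)%nat. intros n m hn hm.
    destruct (hit K) as (lo & hi & h1 & h2 & h3).
    specialize (hK K (le_n _)). rewrite Rabs_right in hK by (apply Rle_ge, pow_le; lra).
    assert (0 <= mu ^ K) by (apply pow_le; lra).
    assert (mu ^ K * (D+1) < eps).
    { apply (Rmult_lt_compat_r (D+1)) in hK; [|lra]. unfold Rdiv in hK.
      rewrite Rmult_assoc, Rinv_l, Rmult_1_r in hK; lra. }
    destruct (h3 n hn), (h3 m hm). unfold Rdist. apply Rabs_def1; nra. }
  destruct (R_complete u hc) as [d hd].
  exists d. split.
  - apply Rle_plus_epsilon. intros eps he.
    destruct (hd eps he) as [K hK]. specialize (hK (S K) ltac:(lia)).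
    unfold Rdist in hK. apply Rabs_def2 in hK.
    destruct (hit 0%nat) as (lo & hi & h1 & h2 & h3).
    destruct (h3 (S K) ltac:(lia)). lra.
  - intros j i hi. apply Rle_plus_epsilon. intros eps he.
    destruct (hd eps he) as [K hK]. specialize (hK (Nat.max i K) ltac:(lia)).
    unfold Rdist in hK. apply Rabs_def2 in hK.
    destruct (hit j) as (lo & hi' & h1 & h2 & h3).
    destruct (h3 i hi). destruct (h3 (Nat.max i K) ltac:(lia)).
    apply Rabs_le. lra.
Qed.
Lemma pow_split (x : R) k m : (k <= m)%nat -> x ^ m = x ^ k * x ^ (m - k).
Proof. intros h. rewrite <- pow_add. f_equal. lia. Qed.

Lemma rsum_last f n : (1 <= n)%nat -> rsum_upto f n = rsum_upto f (n-1) + f n.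
Proof. intros h. destruct n; [lia|]. simpl. replace (n - 0)%nat with n by lia. reflexivity. Qed.

Theorem theorem6p7 (N : nat) (a : nat -> nat) (H : nat -> nat) (psi : R)
  (hN : (2 <= N)%nat) (ha1 : (0 < a 1)%nat)
  (Hinit : forall n, (1 <= n <= N + 1)%nat ->
     H n = (1 + nsum_upto (fun k => a k * H (n - k)) (n - 1))%nat)
  (Hrec : forall n, (1 <= n)%nat ->
     H (n + N)%nat =
       (nsum_upto (fun k => a k * H (n + N - k)) (N - 1) + (1 + a N) * H n)%nat)
  (hpsi : 0 < psi) (hg : gpoly N a psi = 0) :
  exists delta r C : R, 0 < delta /\ 0 < r /\ r < 1 /\
    forall n : nat, (1 <= n)%nat ->
      Rabs (INR (H n) - delta * psi ^ n) <= C * Rpower psi (r * INR n).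
Proof.
  unfold gpoly in hg.
  set (Ssum := rsum_upto (fun k => INR (a k) * psi ^ (N - k)) (N - 1)) in hg.
  assert (hS : INR (a 1%nat) * psi ^ (N-1) <= Ssum).
  { apply (rsum_ge1 (fun k => INR (a k) * psi ^ (N - k))). lia.
    intros k hk. apply Rmult_le_pos; [apply pos_INR | apply pow_le; lra]. }
  assert (ha1' : 0 < INR (a 1%nat)) by (apply lt_0_INR; lia).
  assert (0 < psi ^ (N-1)) by (apply pow_lt; lra).
  assert (0 <= INR (a N)) by apply pos_INR.
  assert (hpsi1 : 1 < psi).
  { destruct (Rle_lt_dec psi 1) as [c|c]; auto.
    assert (psi ^ N <= 1 ^ N) by (apply pow_incr; lra). rewrite pow1 in H2. nra. }
  assert (hpN : forall k, 0 < psi ^ k) by (intros; apply pow_lt; lra).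
  set (p := fun k => (if Nat.eqb k N then 1 + INR (a N) else INR (a k)) / psi ^ k).
  assert (Hp : forall k, (1<=k<=N)%nat -> 0 <= p k).
  { intros k hk. unfold p, Rdiv. apply Rmult_le_pos; [|left; apply Rinv_0_lt_compat, hpN].
    destruct (Nat.eqb k N); [lra| apply pos_INR]. }
  assert (Hp1 : 0 < p 1%nat).
  { unfold p. replace (Nat.eqb 1 N) with false by (symmetry; apply Nat.eqb_neq; lia).
    apply Rdiv_lt_0_compat; auto. }
  assert (Hs : rsum_upto p N = 1).
  { replace N with (S (N-1)) at 1 by lia. simpl.
    rewrite (rsum_ext _ (fun k => / psi ^ N * (INR (a k) * psi ^ (N - k)))).
    2:{ intros k hk. unfold p. replace (Nat.eqb k N) with false by (symmetry; apply Nat.eqb_neq; lia).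
        rewrite (pow_split psi k N) by lia. field. split; apply Rgt_not_eq, hpN. }
    rewrite rsum_scal. fold Ssum. unfold p. replace (S (N-1))%nat with N by lia.
    rewrite Nat.eqb_refl. assert (psi ^ N <> 0) by (apply Rgt_not_eq, hpN).
    replace (/ psi ^ N * Ssum + (1 + INR (a N)) / psi ^ N) with ((Ssum + (1 + INR (a N))) / psi ^ N) by (field; auto).
    replace (Ssum + (1 + INR (a N))) with (psi ^ N) by lra. field; auto. }
  set (u := fun i => INR (H i) / psi ^ i).
  assert (hr : isrec N p u).
  { intros m hm. replace m with ((m - N) + N)%nat by lia.
    assert (hn : (1 <= m - N)%nat) by lia. set (n := (m - N)%nat) in *.
    unfold u at 1. rewrite (Hrec n hn), plus_INR, mult_INR, INR_nsum, plus_INR.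
    rewrite (rsum_last _ N) by lia.
    rewrite (rsum_ext (fun k => p k * u (n + N - k)%nat)
       (fun k => / psi ^ (n+N) * INR (a k * H (n + N - k)%nat))).
    2:{ intros k hk. unfold p, u. replace (Nat.eqb k N) with false by (symmetry; apply Nat.eqb_neq; lia).
        rewrite mult_INR. rewrite (pow_split psi k (n+N)) by lia. field. split; apply Rgt_not_eq, hpN. }
    rewrite rsum_scal. unfold p, u. rewrite Nat.eqb_refl.
    replace (n + N - N)%nat with n by lia. simpl INR.
    rewrite (pow_split psi N (n+N)) by lia. replace (n + N - N)%nat with n by lia.
    field. split; apply Rgt_not_eq, hpN. }
  assert (hupos : forall i, (1 <= i <= N)%nat -> 0 < u i).
  { intros i hi. unfold u. apply Rdiv_lt_0_compat; [|apply hpN].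
    apply lt_0_INR. rewrite (Hinit i) by lia. lia. }
  assert (hinit : forall m, (m <= N)%nat -> exists lo hi, 0 < lo /\ forall i, (1 <= i < 1 + m)%nat -> lo <= u i <= hi).
  { induction m; intros hm.
    - exists 1, 0. split; [lra|]. intros; lia.
    - destruct IHm as (lo & hi & h1 & h2); [lia|].
      exists (Rmin lo (u (1+m)%nat)), (Rmax hi (u (1+m)%nat)). split.
      + apply Rmin_glb_lt; auto. apply hupos; lia.
      + intros i hi'. destruct (Nat.eq_dec i (1+m)) as [e|e].
        * subst i. split; [apply Rmin_r | apply Rmax_r].
        * destruct (h2 i) as [g1 g2]; [lia|]. split.
          -- eapply Rle_trans; [apply Rmin_l|]; auto.
          -- eapply Rle_trans; [|apply Rmax_l]; auto. }
  destruct (hinit N (le_n _)) as (lo0 & hi0 & hlo0 & hw).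
  assert (hN1 : (1 <= N)%nat) by lia.
  pose proof (iterate N p hN1 Hp Hs Hp1 u lo0 hi0 hr hw) as hit.
  pose proof (p1le1 N p hN1 Hp Hs) as hp1le.
  assert (hp1N : 0 < p 1%nat ^ N) by (apply pow_lt; lra).
  assert (p 1%nat ^ N <= 1) by (rewrite <- (pow1 N); apply pow_incr; lra).
  assert (hmu : 1/2 <= mu N p < 1) by (unfold mu; lra).
  assert (hD : 0 <= hi0 - lo0) by (destruct (hw 1%nat) as [g1 g2]; [lia|lra]).
  destruct (conv u N (mu N p) (hi0 - lo0) lo0 ltac:(lra) hD hit) as (d & hd1 & hd2).
  set (L := ln psi).
  assert (hL : 0 < L) by (unfold L; rewrite <- ln_1; apply ln_increasing; lra).
  set (M := ln (mu N p)).
  assert (hM : M < 0) by (unfold M; rewrite <- ln_1; apply ln_increasing; lra).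
  assert (hNR : 2 <= INR N) by (replace 2 with (INR 2) by (simpl; lra); apply le_INR; lia).
  set (eps := Rmin (1/2) (- M / (INR N * L))).
  assert (he0 : 0 < eps).
  { unfold eps. apply Rmin_glb_lt; [lra|]. apply Rdiv_lt_0_compat; [lra|]. nra. }
  assert (he1 : eps <= 1/2) by apply Rmin_l.
  assert (he2 : eps * (INR N * L) <= - M).
  { assert (eps <= - M / (INR N * L)) by apply Rmin_r.
    apply (Rmult_le_compat_r (INR N * L)) in H3; [|nra].
    unfold Rdiv in H3. rewrite Rmult_assoc, Rinv_l, Rmult_1_r in H3; nra. }
  exists d, (1 - eps), ((hi0 - lo0) * exp (eps * INR N * L)).
  split; [lra|]. split; [lra|]. split; [lra|].
  intros n hn.
  set (j := ((n - 1) / N)%nat).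
  assert (hj1 : (j * N <= n - 1)%nat).
  { unfold j. rewrite Nat.mul_comm. apply Nat.Div0.mul_div_le. }
  assert (hj2 : (n <= j * N + N)%nat).
  { pose proof (Nat.div_mod_eq (n-1) N). pose proof (Nat.mod_upper_bound (n-1) N ltac:(lia)).
    fold j in H3. lia. }
  assert (hjr : INR n <= INR j * INR N + INR N).
  { rewrite <- mult_INR, <- plus_INR. apply le_INR; auto. }
  specialize (hd2 j n ltac:(lia)).
  assert (hHn : INR (H n) = psi ^ n * u n) by (unfold u; field; apply Rgt_not_eq, hpN).
  rewrite hHn.
  replace (psi ^ n * u n - d * psi ^ n) with (psi ^ n * (u n - d)) by ring.
  rewrite Rabs_mult, (Rabs_right (psi ^ n)) by (left; apply hpN).
  assert (key : psi ^ n * mu N p ^ j <= exp (eps * INR N * L) * Rpower psi ((1 - eps) * INR n)).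
  { rewrite <- (Rpower_pow n psi hpsi), <- (Rpower_pow j (mu N p)) by lra.
    unfold Rpower. fold L. fold M. rewrite <- !exp_plus.
    assert (INR j * M <= - eps * L * (INR n - INR N)).
    { assert (0 <= INR j) by apply pos_INR.
      assert (INR j * M <= - INR j * (eps * (INR N * L))) by nra.
      assert (0 < eps * L) by nra. nra. }
    assert (ex : INR n * L + INR j * M <= eps * INR N * L + (1 - eps) * INR n * L) by nra.
    destruct (Rle_lt_or_eq_dec _ _ ex) as [c|c].
    - left; apply exp_increasing; auto.
    - rewrite c; lra. }
  assert (0 <= Rabs (u n - d)) by apply Rabs_pos.
  assert (0 <= mu N p ^ j) by (apply pow_le; lra).
  assert (0 < psi ^ n) by apply hpN.
  apply Rle_trans with (psi ^ n * (mu N p ^ j * (hi0 - lo0))).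
  - apply Rmult_le_compat_l; lra.
  - nra.
Qed.
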